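(* Let $X\in\mathbb{R}^n$ be arbitrary, $k\in[n]$, and let $\widehat\theta^{(k)}$ be any minimizer of $\|X-\theta\|^2$ over $\Theta_k^\uparrow$; let $\widehat\theta^{(n)}$ be the minimizer over $\Theta_n^\uparrow$. Let $0=\widehat a_0<\widehat a_1<\cdots<\widehat a_m=n$ be such that $(\widehat a_{j-1}:\widehat a_j]$, $j\in[m]$, are the maximal blocks of consecutive indices on which $\widehat\theta^{(k)}$ is constant, and let $\widehat A_k=\{\widehat a_1,\dots,\widehat a_m\}$ (similarly $\widehat A_n$ for $\widehat\theta^{(n)}$). Then: 1. For each $j\in[m]$, $\widehat{\theta}_i^{(k)}=\overline{X}_{(\widehat{a}_{j-1}:\widehat{a}_j]}$ for all $i\in(\widehat{a}_{j-1}:\widehat{a}_j]$. 2. For each $j\in[m-1]$ and all integers $0\leq s<\widehat{a}_j<t\leq n$, $$\overline{X}_{(s:\widehat{a}_j]}<\frac{\widehat{\theta}_{\widehat{a}_j}^{(k)}+\widehat{\theta}^{(k)}_{\widehat{a}_{j+1}}}{2}<\overline{X}_{(\widehat{a}_j:t]};$$ consequently $\widehat{\theta}_{\widehat{a}_j}^{(n)}<\frac{\widehat{\theta}^{(k)}_{\widehat{a}_j}+\widehat{\theta}^{(k)}_{\widehat{a}_{j+1}}}{2}<\widehat{\theta}_{\widehat{a}_j+1}^{(n)}$. 3. $\widehat{A}_k\subset\widehat{A}_n$.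
   Context: $[n]=\{1,\dots,n\}$. For reals $a\le b$, $(a:b]$ is the set of integers $i$ with $a<i\le b$; for nonempty $J$, $\overline X_J=|J|^{-1}\sum_{i\in J}X_i$. For $k\in[n]$, $\Theta_k^{\uparrow}$ is the set of $\theta\in\mathbb{R}^n$ for which there exist integers $0=a_0\le\cdots\le a_k=n$ and reals $\mu_1\le\cdots\le\mu_k$ with $\theta_i=\mu_j$ for all $i\in(a_{j-1}:a_j]$; $\Theta_n^\uparrow$ is the set of all nondecreasing vectors. *)

(* Defs.v *)
(* real vectors in R^n are represented as functions nat -> R,
   of which only the coordinates 1..n are meaningful. *)
From Stdlib Require Import Reals Lra Lia List.
Open Scope R_scope.

Definition sum_oc (f : nat -> R) (a b : nat) : R :=
  fold_right Rplus 0 (map f (seq (S a) (b - a))).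

(* mean of X over (a:b] (used only with a < b, so the block is nonempty) *)
Definition mean_oc (X : nat -> R) (a b : nat) : R :=
  sum_oc X a b / INR (b - a).

Definition sqdist (n : nat) (X theta : nat -> R) : R :=
  sum_oc (fun i => (X i - theta i) ^ 2) 0 n.

Definition InThetaUp (n k : nat) (theta : nat -> R) : Prop :=
  exists (a : nat -> nat) (mu : nat -> R),
    a 0%nat = 0%nat /\ a k = n /\
    (forall j, (j < k)%nat -> (a j <= a (S j))%nat) /\
    (forall j, (1 <= j < k)%nat -> mu j <= mu (S j)) /\
    (forall j i, (1 <= j <= k)%nat -> (a (j - 1) < i <= a j)%nat -> theta i = mu j).

Definition Nondecr (n : nat) (theta : nat -> R) : Prop :=
  forall i j, (1 <= i <= j)%nat -> (j <= n)%nat -> theta i <= theta j.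

Definition MaxBlocks (n : nat) (theta : nat -> R) (m : nat) (a : nat -> nat) : Prop :=
  a 0%nat = 0%nat /\ a m = n /\
  (forall j, (j < m)%nat -> (a j < a (S j))%nat) /\
  (forall j i i', (1 <= j <= m)%nat -> (a (j - 1) < i <= a j)%nat ->
        (a (j - 1) < i' <= a j)%nat -> theta i = theta i') /\
  (forall j, (1 <= j < m)%nat -> theta (a j) <> theta (S (a j))).

(* Main.v *)
Require Import Defs.
From Stdlib Require Import Reals Lra Lia List Arith.
Open Scope R_scope.

Lemma fr_shift : forall l x, fold_right Rplus x l = fold_right Rplus 0 l + x.
Proof. induction l; intros; simpl; [lra|]. rewrite IHl. lra. Qed.

Lemma sum_oc_empty f a b : (b <= a)%nat -> sum_oc f a b = 0.
Proof. intros. unfold sum_oc. replace (b - a)%nat with 0%nat by lia. reflexivity. Qed.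

Lemma sum_oc_S f a b : (a <= b)%nat -> sum_oc f a (S b) = sum_oc f a b + f (S b).
Proof.
  intros. unfold sum_oc. replace (S b - a)%nat with (S (b - a)) by lia.
  rewrite seq_S, map_app, fold_right_app. simpl. rewrite fr_shift.
  replace (S (a + (b - a))) with (S b) by lia. lra.
Qed.

Lemma sum_oc_ext f g a b : (forall i, (a < i <= b)%nat -> f i = g i) ->
  sum_oc f a b = sum_oc g a b.
Proof.
  induction b; intros H.
  - rewrite !sum_oc_empty by lia. reflexivity.
  - destruct (le_lt_dec a b).
    + rewrite !sum_oc_S by lia. rewrite IHb by (intros; apply H; lia).
      rewrite H by lia. reflexivity.
    + rewrite !sum_oc_empty by lia. reflexivity.
Qed.

Lemma sum_oc_split f a b c : (a <= b <= c)%nat ->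
  sum_oc f a c = sum_oc f a b + sum_oc f b c.
Proof.
  induction c; intros H.
  - rewrite !sum_oc_empty by lia. lra.
  - destruct (le_lt_dec b c).
    + rewrite !sum_oc_S by lia. rewrite IHc by lia. lra.
    + replace b with (S c) by lia. rewrite (sum_oc_empty f (S c) (S c)) by lia. lra.
Qed.

Lemma sum_oc_aff f al be a b :
  sum_oc (fun i => al * f i + be) a b = al * sum_oc f a b + INR (b - a) * be.
Proof.
  induction b.
  - rewrite !sum_oc_empty by lia. simpl. lra.
  - destruct (le_lt_dec a b).
    + rewrite !sum_oc_S by lia. rewrite IHb.
      replace (S b - a)%nat with (S (b - a)) by lia. rewrite S_INR. lra.
    + rewrite !sum_oc_empty by lia. replace (S b - a)%nat with 0%nat by lia. simpl. lra.
Qed.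

Lemma sum_oc_minus f g a b :
  sum_oc (fun i => f i - g i) a b = sum_oc f a b - sum_oc g a b.
Proof.
  induction b.
  - rewrite !sum_oc_empty by lia. lra.
  - destruct (le_lt_dec a b).
    + rewrite !sum_oc_S by lia. rewrite IHb. lra.
    + rewrite !sum_oc_empty by lia. lra.
Qed.

Lemma sum_oc_zero f a b : (forall i, (a < i <= b)%nat -> f i = 0) -> sum_oc f a b = 0.
Proof.
  intros H. rewrite (sum_oc_ext f (fun i => 0 * f i + 0)).
  - rewrite sum_oc_aff. lra.
  - intros i Hi. rewrite H by lia. lra.
Qed.

Lemma diff_const X th' th p q w u :
  (forall i, (p < i <= q)%nat -> th' i = w) ->
  (forall i, (p < i <= q)%nat -> th i = u) ->
  sum_oc (fun i => (X i - th' i) ^ 2 - (X i - th i) ^ 2) p q =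
  (u - w) * (2 * sum_oc X p q - INR (q - p) * (u + w)).
Proof.
  intros H1 H2.
  rewrite (sum_oc_ext _ (fun i => (2 * (u - w)) * X i + (- ((u - w) * (u + w))))).
  - rewrite sum_oc_aff. ring.
  - intros i Hi. rewrite H1, H2 by lia. ring.
Qed.

Lemma perturb n X th th' p q : (p <= q <= n)%nat ->
  (forall i, (1 <= i <= n)%nat -> ~ (p < i <= q)%nat -> th' i = th i) ->
  sqdist n X th' - sqdist n X th =
  sum_oc (fun i => (X i - th' i) ^ 2 - (X i - th i) ^ 2) p q.
Proof.
  intros Hpq H. unfold sqdist. rewrite <- sum_oc_minus.
  rewrite (sum_oc_split _ 0 p n) by lia. rewrite (sum_oc_split _ p q n) by lia.
  rewrite (sum_oc_zero _ 0 p), (sum_oc_zero _ q n). lra.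
  - intros i Hi. rewrite H by lia. ring.
  - intros i Hi. rewrite H by lia. ring.
Qed.

Definition inR (p q i : nat) : bool := (Nat.ltb p i && Nat.leb i q)%bool.

Lemma inR_iff p q i : inR p q i = true <-> (p < i <= q)%nat.
Proof.
  unfold inR. rewrite Bool.andb_true_iff, Nat.ltb_lt, Nat.leb_le. tauto.
Qed.
Lemma inR_true p q i : (p < i <= q)%nat -> inR p q i = true.
Proof. apply inR_iff. Qed.
Lemma inR_false p q i : ~ (p < i <= q)%nat -> inR p q i = false.
Proof. intros H. destruct (inR p q i) eqn:E; auto. apply inR_iff in E. tauto. Qed.
Lemma eqb_false x y : x <> y -> (x =? y)%nat = false.
Proof. apply Nat.eqb_neq. Qed.

Lemma small_eps d L A : 0 < d -> 0 <= L ->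
  (forall e, 0 < e <= d -> 0 <= e * (2 * A + L * e)) -> 0 <= A.
Proof.
  intros Hd HL H. destruct (Rle_or_lt 0 A) as [|HA]; auto. exfalso.
  set (e := Rmin d (- A / (L + 1))).
  assert (He0 : 0 < e). { apply Rmin_glb_lt; auto. apply Rdiv_lt_0_compat; lra. }
  assert (He1 : e <= d) by apply Rmin_l.
  assert (He2 : (L + 1) * e <= - A).
  { replace (- A) with ((L + 1) * (- A / (L + 1))) by (field; lra).
    apply Rmult_le_compat_l; [lra | apply Rmin_r]. }
  specialize (H e (conj He0 He1)).
  assert (2 * A + L * e < 0) by nra. nra.
Qed.

Lemma nat_mono (c : nat -> nat) hi : (forall j, (j < hi)%nat -> (c j <= c (S j))%nat) ->
  forall x y, (x <= y)%nat -> (y <= hi)%nat -> (c x <= c y)%nat.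
Proof.
  intros H x y. induction y; intros.
  - replace x with 0%nat by lia. lia.
  - destruct (Nat.eq_dec x (S y)). subst; lia.
    specialize (H y ltac:(lia)). specialize (IHy ltac:(lia) ltac:(lia)). lia.
Qed.

Lemma nat_smono (c : nat -> nat) hi : (forall j, (j < hi)%nat -> (c j < c (S j))%nat) ->
  forall x y, (x < y)%nat -> (y <= hi)%nat -> (c x < c y)%nat.
Proof.
  intros H x y. induction y; intros. lia.
  destruct (Nat.eq_dec x y). subst; apply H; lia.
  specialize (H y ltac:(lia)). specialize (IHy ltac:(lia) ltac:(lia)). lia.
Qed.

Lemma R_mono (f : nat -> R) hi : (forall j, (1 <= j < hi)%nat -> f j <= f (S j)) ->
  forall x y, (1 <= x)%nat -> (x <= y)%nat -> (y <= hi)%nat -> f x <= f y.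
Proof.
  intros H x y. induction y; intros. lia.
  destruct (Nat.eq_dec x (S y)). subst; lra.
  specialize (H y ltac:(lia)). specialize (IHy ltac:(lia) ltac:(lia) ltac:(lia)). lra.
Qed.

Lemma piece_exists (c : nat -> nat) : c 0%nat = 0%nat -> forall l i, (1 <= i <= c l)%nat ->
  exists l', (1 <= l' <= l)%nat /\ (c (l' - 1) < i <= c l')%nat.
Proof.
  intros H0. induction l; intros i Hi. rewrite H0 in Hi; lia.
  destruct (le_lt_dec i (c l)).
  - destruct (IHl i) as [l' [H1 H2]]; [lia|]. exists l'. split; [lia|auto].
  - exists (S l). replace (S l - 1)%nat with l by lia. lia.
Qed.

Lemma rep_in n k th m' (c : nat -> nat) (v : nat -> R) :
  (m' <= k)%nat -> c 0%nat = 0%nat -> c m' = n ->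
  (forall j, (j < m')%nat -> (c j <= c (S j))%nat) ->
  (forall j, (1 <= j < m')%nat -> v j <= v (S j)) ->
  (forall j i, (1 <= j <= m')%nat -> (c (j - 1) < i <= c j)%nat -> th i = v j) ->
  InThetaUp n k th.
Proof.
  intros Hmk H0 Hm Hc Hv Hth.
  exists (fun j => c (Nat.min j m')), (fun j => v (Nat.min j m')).
  split; [simpl; auto|]. split; [rewrite Nat.min_r by lia; auto|].
  split; [|split].
  - intros j Hj. destruct (le_lt_dec m' j).
    + rewrite !Nat.min_r by lia; lia.
    + rewrite !Nat.min_l by lia; apply Hc; lia.
  - intros j Hj. destruct (le_lt_dec m' j).
    + rewrite !Nat.min_r by lia; lra.
    + rewrite !Nat.min_l by lia; apply Hv; lia.
  - intros j i Hj Hi. destruct (le_lt_dec j m').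
    + rewrite (Nat.min_l (j - 1)) in Hi by lia. rewrite (Nat.min_l j) in * by lia.
      apply Hth; lia.
    + rewrite !Nat.min_r in Hi by lia. lia.
Qed.

Lemma inTheta_nondecr n k th : InThetaUp n k th -> Nondecr n th.
Proof.
  intros [c [mu [H0 [Hk [Hc [Hmu Hth]]]]]] i j Hij Hjn.
  destruct (piece_exists c H0 k i) as [li [Hli Hi]]; [lia|].
  destruct (piece_exists c H0 k j) as [lj [Hlj Hj]]; [lia|].
  rewrite (Hth li i), (Hth lj j) by lia.
  assert (li <= lj)%nat.
  { destruct (le_lt_dec li lj); auto. exfalso.
    assert (c lj <= c (li - 1))%nat by (apply (nat_mono c k); auto; lia). lia. }
  apply (R_mono mu k); auto; lia.
Qed.

Lemma m_le_k n k th m a : (1 <= k)%nat -> InThetaUp n k th -> MaxBlocks n th m a -> (m <= k)%nat.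
Proof.
  intros Hk1 [c [mu [H0 [Hck [Hc [Hmu Hth]]]]]] [A0 [Am [Ainc [Acst Ajump]]]].
  assert (Hjump : forall p, (1 <= p)%nat -> (p < n)%nat -> th p <> th (S p) ->
            exists l, (1 <= l < k)%nat /\ c l = p).
  { intros p Hp1 Hpn Hne. destruct (piece_exists c H0 k p) as [l [Hl Hpl]]; [lia|].
    destruct (Nat.eq_dec (c l) p).
    - exists l. split; auto. destruct (Nat.eq_dec l k); [subst; lia | lia].
    - exfalso. apply Hne. rewrite (Hth l p), (Hth l (S p)) by lia. reflexivity. }
  assert (Hs := nat_smono a m Ainc).
  assert (Hstep : forall j, (1 <= j)%nat -> (j < m)%nat -> exists l, (j <= l < k)%nat /\ c l = a j).
  { induction j; intros. lia. destruct (Nat.eq_dec j 0).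
    - subst. destruct (Hjump (a 1%nat)) as [l [Hl Hcl]].
      + specialize (Hs 0%nat 1%nat); lia.
      + specialize (Hs 1%nat m); lia.
      + apply Ajump; lia.
      + exists l; split; [lia|auto].
    - destruct IHj as [l [Hl Hcl]]; [lia|lia|].
      destruct (Hjump (a (S j))) as [l2 [Hl2 Hcl2]].
      + specialize (Hs 0%nat (S j)); lia.
      + specialize (Hs (S j) m); lia.
      + apply Ajump; lia.
      + exists l2. split; auto. split; [|lia].
        destruct (le_lt_dec l2 l); [|lia]. exfalso.
        assert (c l2 <= c l)%nat by (apply (nat_mono c k); auto; lia).
        specialize (Ainc j ltac:(lia)). lia. }
  destruct (le_lt_dec m 1) as [Hm1|Hm1]. lia. destruct (Hstep (m - 1)%nat) as [l [Hl _]]; lia.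
Qed.

Definition KFacts n k X thk m a :=
  (1 <= k)%nat /\ (m <= k)%nat /\ (1 <= m)%nat /\ a 0%nat = 0%nat /\ a m = n /\
  (forall j, (j < m)%nat -> (a j < a (S j))%nat) /\
  (forall j i, (1 <= j <= m)%nat -> (a (j - 1) < i <= a j)%nat -> thk i = thk (a j)) /\
  (forall j, (1 <= j < m)%nat -> thk (a j) < thk (a (S j))) /\
  (forall th, InThetaUp n k th -> sqdist n X thk <= sqdist n X th).

Lemma block_unique m (a : nat -> nat) l j i : (forall j, (j < m)%nat -> (a j < a (S j))%nat) ->
  (1 <= l <= m)%nat -> (1 <= j <= m)%nat -> (a (l - 1) < i <= a l)%nat ->
  (a (j - 1) < i <= a j)%nat -> l = j.
Proof.
  intros Ainc Hl Hj H1 H2.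
  assert (Hm : forall x y, (x <= y)%nat -> (y <= m)%nat -> (a x <= a y)%nat).
  { apply nat_mono. intros; specialize (Ainc j0 H); lia. }
  destruct (lt_eq_lt_dec l j) as [[H|H]|H]; auto.
  - specialize (Hm l (j - 1)%nat ltac:(lia) ltac:(lia)). lia.
  - specialize (Hm j (l - 1)%nat ltac:(lia) ltac:(lia)). lia.
Qed.

Lemma L_mean n k X thk m a : KFacts n k X thk m a -> forall j, (1 <= j <= m)%nat ->
  sum_oc X (a (j - 1)%nat) (a j) = INR (a j - a (j - 1))%nat * thk (a j).
Proof.
  intros [Hk1 [Hmk [Hm1 [A0 [Am [Ainc [Hc [Hlt Hopt]]]]]]]] j Hj.
  assert (Hs := nat_smono a m Ainc).
  set (mu := thk (a j)). set (N := INR (a j - a (j - 1))%nat). set (Sm := sum_oc X (a (j-1)%nat) (a j)).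
  assert (HN : 0 < N). { apply lt_0_INR. specialize (Hs (j-1)%nat j). lia. }
  assert (Hpert : forall e, ((2 <= j)%nat -> thk (a (j - 1)%nat) <= mu + e) ->
                  ((j < m)%nat -> mu + e <= thk (a (S j))) ->
                  0 <= (- e) * (2 * Sm - N * (mu + (mu + e)))).
  { intros e He1 He2.
    set (th' := fun i => if inR (a (j - 1)%nat) (a j) i then mu + e else thk i).
    assert (Hin : InThetaUp n k th').
    { apply (rep_in n k th' m a (fun l => if (l =? j)%nat then mu + e else thk (a l))); auto.
      - intros l Hl; specialize (Ainc l Hl); lia.
      - intros l Hl. destruct (Nat.eqb_spec l j).
        + subst l. cbv beta. rewrite (eqb_false (S j) j) by lia. apply He2; lia.
        + destruct (Nat.eqb_spec (S l) j).
          * subst j. replace (S l - 1)%nat with l in He1 by lia. apply He1; lia.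
          * apply Rlt_le, Hlt; lia.
      - intros l i Hl Hi. unfold th'. destruct (Nat.eqb_spec l j).
        + subst l. rewrite inR_true by lia. reflexivity.
        + rewrite inR_false. apply Hc; auto.
          intro Hr. apply n0. apply (block_unique m a l j i); auto. }
    specialize (Hopt th' Hin).
    assert (E : sqdist n X th' - sqdist n X thk = (mu - (mu + e)) * (2 * Sm - N * (mu + (mu + e)))).
    { rewrite perturb with (p := a (j-1)%nat) (q := a j).
      - apply diff_const.
        + intros i Hi. unfold th'. rewrite inR_true by lia. reflexivity.
        + intros i Hi. apply Hc; auto.
      - assert (a (j-1) < a j)%nat by (apply Hs; lia). destruct (Nat.eq_dec j m); [subst; lia| specialize (Hs j m); lia].
      - intros i Hi Hr. unfold th'. rewrite inR_false; auto. }
    lra. }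
  assert (Hd : exists d, 0 < d /\ forall e, - d <= e <= d ->
            ((2 <= j)%nat -> thk (a (j - 1)%nat) <= mu + e) /\
            ((j < m)%nat -> mu + e <= thk (a (S j)))).
  { assert (Hd1 : exists d1, 0 < d1 /\ ((2 <= j)%nat -> d1 <= mu - thk (a (j - 1)%nat))).
    { destruct (le_lt_dec 2 j).
      - exists (mu - thk (a (j - 1)%nat)). split; auto; [|lra].
        specialize (Hlt (j - 1)%nat ltac:(lia)). replace (S (j - 1)) with j in Hlt by lia.
        unfold mu; lra.
      - exists 1. split. lra. intros; lia. }
    assert (Hd2 : exists d2, 0 < d2 /\ ((j < m)%nat -> d2 <= thk (a (S j)) - mu)).
    { destruct (le_lt_dec m j).
      - exists 1. split. lra. intros; lia.
      - exists (thk (a (S j)) - mu). split; [|lra]. specialize (Hlt j ltac:(lia)). unfold mu; lra. }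
    destruct Hd1 as [d1 [Hd1 Hd1']]. destruct Hd2 as [d2 [Hd2 Hd2']].
    exists (Rmin d1 d2). split. apply Rmin_glb_lt; auto.
    intros e He. assert (Rmin d1 d2 <= d1) by apply Rmin_l. assert (Rmin d1 d2 <= d2) by apply Rmin_r.
    split; intros; [specialize (Hd1' H1) | specialize (Hd2' H1)]; lra. }
  destruct Hd as [d [Hd Hde]].
  assert (A1 : 0 <= - (Sm - N * mu)).
  { apply (small_eps d N); [auto|lra|]. intros e He.
    destruct (Hde e ltac:(lra)) as [H1 H2]. specialize (Hpert e H1 H2). nra. }
  assert (A2 : 0 <= Sm - N * mu).
  { apply (small_eps d N); [auto|lra|]. intros e He.
    destruct (Hde (- e) ltac:(lra)) as [H1 H2]. specialize (Hpert (- e) H1 H2). nra. }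
  lra.
Qed.

Lemma arith_left m1 m2 S1 N1 N2 : 0 < N1 -> 0 < N2 -> m1 < m2 -> N1 * (m1 + m2) <= 2 * S1 ->
  let e := (m2 - m1) * N1 / (2 * (N1 + N2)) in
  0 < e < m2 - m1 /\
  (m1 - (m2 - e)) * (2 * S1 - N1 * (m1 + (m2 - e))) +
  (m2 - (m2 - e)) * (2 * (N2 * m2) - N2 * (m2 + (m2 - e))) < 0.
Proof.
  intros H1 H2 H3 H4 e.
  assert (He : 2 * (N1 + N2) * e = (m2 - m1) * N1) by (unfold e; field; lra).
  assert (0 < e) by (unfold e; apply Rdiv_lt_0_compat; nra).
  assert (e < m2 - m1) by nra.
  split; [lra|].
  set (E := 2 * S1 - N1 * (m1 + m2)).
  replace ((m1 - (m2 - e)) * (2 * S1 - N1 * (m1 + (m2 - e))) +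
    (m2 - (m2 - e)) * (2 * (N2 * m2) - N2 * (m2 + (m2 - e))))
    with (- ((m2 - m1 - e) * E) - e * ((m2 - m1) * N1) / 2).
  - assert (0 <= (m2 - m1 - e) * E) by (apply Rmult_le_pos; unfold E; lra).
    assert (0 < e * ((m2 - m1) * N1)) by (apply Rmult_lt_0_compat; nra).
    lra.
  - unfold E. apply Rmult_eq_reg_l with (2 * (N1 + N2)); [|lra].
    replace (2 * (N1 + N2) * (- ((m2 - m1 - e) * (2 * S1 - N1 * (m1 + m2))) - e * ((m2 - m1) * N1) / 2))
      with (- (2 * (N1 + N2)) * ((m2 - m1 - e) * (2 * S1 - N1 * (m1 + m2))) - (2 * (N1 + N2) * e) * ((m2 - m1) * N1) / 2) by field.
    rewrite He. nra.
Qed.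

Lemma arith_right m1 m2 S2 N1 N2 : 0 < N1 -> 0 < N2 -> m1 < m2 -> 2 * S2 <= N2 * (m1 + m2) ->
  let e := (m2 - m1) * N2 / (2 * (N1 + N2)) in
  0 < e < m2 - m1 /\
  (m1 - (m1 + e)) * (2 * (N1 * m1) - N1 * (m1 + (m1 + e))) +
  (m2 - (m1 + e)) * (2 * S2 - N2 * (m2 + (m1 + e))) < 0.
Proof.
  intros H1 H2 H3 H4 e.
  assert (He : 2 * (N1 + N2) * e = (m2 - m1) * N2) by (unfold e; field; lra).
  assert (0 < e) by (unfold e; apply Rdiv_lt_0_compat; nra).
  assert (e < m2 - m1) by nra.
  split; [lra|].
  set (E := N2 * (m1 + m2) - 2 * S2).
  replace ((m1 - (m1 + e)) * (2 * (N1 * m1) - N1 * (m1 + (m1 + e))) +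
  (m2 - (m1 + e)) * (2 * S2 - N2 * (m2 + (m1 + e))))
    with (- ((m2 - m1 - e) * E) - e * ((m2 - m1) * N2) / 2).
  - assert (0 <= (m2 - m1 - e) * E) by (apply Rmult_le_pos; unfold E; lra).
    assert (0 < e * ((m2 - m1) * N2)) by (apply Rmult_lt_0_compat; nra).
    lra.
  - unfold E. apply Rmult_eq_reg_l with (2 * (N1 + N2)); [|lra].
    replace (2 * (N1 + N2) * (- ((m2 - m1 - e) * (N2 * (m1 + m2) - 2 * S2)) - e * ((m2 - m1) * N2) / 2))
      with (- (2 * (N1 + N2)) * ((m2 - m1 - e) * (N2 * (m1 + m2) - 2 * S2)) - (2 * (N1 + N2) * e) * ((m2 - m1) * N2) / 2) by field.
    rewrite He. nra.
Qed.

Lemma INR_split x y z : (z <= y <= x)%nat -> INR (x - z) = INR (x - y) + INR (y - z).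
Proof. intros. rewrite <- plus_INR. f_equal. lia. Qed.

Lemma L_left n k X thk m a : KFacts n k X thk m a -> forall j s, (1 <= j < m)%nat ->
  (a (j - 1) <= s < a j)%nat ->
  2 * sum_oc X s (a j) < INR (a j - s)%nat * (thk (a j) + thk (a (S j))).
Proof.
  intros KF j s Hj Hsj. assert (Hmean := L_mean n k X thk m a KF).
  destruct KF as [Hk1 [Hmk [Hm1 [A0 [Am [Ainc [Hc [Hlt Hopt]]]]]]]].
  assert (Hs := nat_smono a m Ainc).
  assert (Hj1 : (a j < a (S j))%nat) by (apply Ainc; lia).
  assert (Hj2 : (a (S j) <= n)%nat) by (destruct (Nat.eq_dec (S j) m); [subst; lia | specialize (Hs (S j) m); lia]).
  set (m1 := thk (a j)). set (m2 := thk (a (S j))).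
  set (N1 := INR (a j - s)%nat). set (N2 := INR (a (S j) - a j)%nat).
  set (S1 := sum_oc X s (a j)).
  assert (HN1 : 0 < N1) by (apply lt_0_INR; lia).
  assert (HN2 : 0 < N2) by (apply lt_0_INR; lia).
  assert (H12 : m1 < m2) by (apply Hlt; lia).
  destruct (Rlt_or_le (2 * S1) (N1 * (m1 + m2))) as [ok|Hcon]; auto. exfalso.
  destruct (arith_left m1 m2 S1 N1 N2 HN1 HN2 H12 Hcon) as [[He1 He2] Hneg].
  set (e := (m2 - m1) * N1 / (2 * (N1 + N2))) in *.
  set (w := m2 - e).
  set (th' := fun i => if inR s (a (S j)) i then w else thk i).
  assert (Hin : InThetaUp n k th').
  { apply (rep_in n k th' m (fun l => if (l =? j)%nat then s else a l)
                            (fun l => if (l =? S j)%nat then w else thk (a l))); auto.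
    - cbv beta. rewrite eqb_false by lia. auto.
    - cbv beta. rewrite eqb_false by lia. auto.
    - intros l Hl. cbv beta. destruct (Nat.eqb_spec l j); destruct (Nat.eqb_spec (S l) j).
      + lia.
      + subst l. lia.
      + subst j. replace (S l - 1)%nat with l in Hsj by lia. lia.
      + apply Nat.lt_le_incl, Ainc; lia.
    - intros l Hl. cbv beta. destruct (Nat.eqb_spec l (S j)); destruct (Nat.eqb_spec (S l) (S j)).
      + lia.
      + subst l. assert (thk (a (S j)) < thk (a (S (S j)))) by (apply Hlt; lia). unfold w, m2 in *. lra.
      + assert (l = j) by lia. subst l. unfold w, m1, m2 in *. lra.
      + apply Rlt_le, Hlt; lia.
    - intros l i Hl Hi. cbv beta in *. unfold th'.
      destruct (Nat.eqb_spec l (S j)).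
      + subst l. replace (S j - 1)%nat with j in Hi by lia.
        rewrite Nat.eqb_refl in Hi. rewrite eqb_false in Hi by lia.
        rewrite inR_true by lia. reflexivity.
      + destruct (Nat.eqb_spec l j).
        * subst l. rewrite eqb_false in Hi by lia.
          rewrite inR_false by lia. apply Hc; lia.
        * rewrite eqb_false in Hi by lia. rewrite inR_false.
          -- apply Hc; lia.
          -- intros Hr. destruct (le_lt_dec i (a j)).
             ++ apply n1. apply (block_unique m a l j i); auto; lia.
             ++ apply n0. apply (block_unique m a l (S j) i); auto; try lia.
                replace (S j - 1)%nat with j by lia. lia. }
  specialize (Hopt th' Hin).
  assert (E : sqdist n X th' - sqdist n X thk =
     (m1 - w) * (2 * S1 - N1 * (m1 + w)) + (m2 - w) * (2 * (N2 * m2) - N2 * (m2 + w))).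
  { rewrite perturb with (p := s) (q := a (S j)).
    - rewrite (sum_oc_split _ s (a j) (a (S j))) by lia.
      rewrite (diff_const X th' thk s (a j) w m1), (diff_const X th' thk (a j) (a (S j)) w m2).
      + specialize (Hmean (S j) ltac:(lia)). replace (S j - 1)%nat with j in Hmean by lia.
        rewrite Hmean. fold N1 N2 S1 m2. reflexivity.
      + intros i Hi. unfold th'. rewrite inR_true by lia. reflexivity.
      + intros i Hi. replace (a j) with (a (S j - 1)%nat) in Hi by (f_equal; lia). apply Hc; lia.
      + intros i Hi. unfold th'. rewrite inR_true by lia. reflexivity.
      + intros i Hi. apply Hc; lia.
    - lia.
    - intros i Hi Hr. unfold th'. rewrite inR_false; auto. }
  unfold w in E. lra.
Qed.

Lemma L_right n k X thk m a : KFacts n k X thk m a -> forall j t, (1 <= j < m)%nat ->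
  (a j < t <= a (S j))%nat ->
  INR (t - a j)%nat * (thk (a j) + thk (a (S j))) < 2 * sum_oc X (a j) t.
Proof.
  intros KF j t Hj Htj. assert (Hmean := L_mean n k X thk m a KF).
  destruct KF as [Hk1 [Hmk [Hm1 [A0 [Am [Ainc [Hc [Hlt Hopt]]]]]]]].
  assert (Hs := nat_smono a m Ainc).
  assert (Hj0 : (a (j - 1) < a j)%nat) by (apply Hs; lia).
  assert (Hj2 : (a (S j) <= n)%nat) by (destruct (Nat.eq_dec (S j) m); [subst; lia | specialize (Hs (S j) m); lia]).
  set (m1 := thk (a j)). set (m2 := thk (a (S j))).
  set (N1 := INR (a j - a (j - 1))%nat). set (N2 := INR (t - a j)%nat).
  set (S2 := sum_oc X (a j) t).
  assert (HN1 : 0 < N1) by (apply lt_0_INR; lia).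
  assert (HN2 : 0 < N2) by (apply lt_0_INR; lia).
  assert (H12 : m1 < m2) by (apply Hlt; lia).
  destruct (Rlt_or_le (N2 * (m1 + m2)) (2 * S2)) as [ok|Hcon]; auto. exfalso.
  destruct (arith_right m1 m2 S2 N1 N2 HN1 HN2 H12 Hcon) as [[He1 He2] Hneg].
  set (e := (m2 - m1) * N2 / (2 * (N1 + N2))) in *.
  set (w := m1 + e).
  set (th' := fun i => if inR (a (j - 1)%nat) t i then w else thk i).
  assert (Hin : InThetaUp n k th').
  { apply (rep_in n k th' m (fun l => if (l =? j)%nat then t else a l)
                            (fun l => if (l =? j)%nat then w else thk (a l))); auto.
    - cbv beta. rewrite eqb_false by lia. auto.
    - cbv beta. rewrite eqb_false by lia. auto.
    - intros l Hl. cbv beta. destruct (Nat.eqb_spec l j); destruct (Nat.eqb_spec (S l) j).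
      + lia.
      + subst l. lia.
      + subst j. replace (S l - 1)%nat with l in Hj0 by lia. lia.
      + apply Nat.lt_le_incl, Ainc; lia.
    - intros l Hl. cbv beta. destruct (Nat.eqb_spec l j); destruct (Nat.eqb_spec (S l) j).
      + lia.
      + subst l. unfold w, m1, m2 in *. lra.
      + subst j. assert (thk (a l) < thk (a (S l))) by (apply Hlt; lia). unfold w, m1 in *. lra.
      + apply Rlt_le, Hlt; lia.
    - intros l i Hl Hi. cbv beta in *. unfold th'.
      destruct (Nat.eqb_spec l j).
      + subst l. rewrite eqb_false in Hi by lia.
        rewrite inR_true by lia. reflexivity.
      + destruct (Nat.eqb_spec (l - 1) j).
        * assert (l = S j) by lia. subst l.
          rewrite inR_false by lia. apply Hc; [lia|]. replace (S j - 1)%nat with j by lia. lia.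
        * rewrite inR_false.
          -- apply Hc; lia.
          -- intros Hr. destruct (le_lt_dec i (a j)).
             ++ apply n0. apply (block_unique m a l j i); auto; lia.
             ++ apply n1. assert (l = S j); [|lia].
                apply (block_unique m a l (S j) i); auto; try lia.
                replace (S j - 1)%nat with j by lia. lia. }
  specialize (Hopt th' Hin).
  assert (E : sqdist n X th' - sqdist n X thk =
     (m1 - w) * (2 * (N1 * m1) - N1 * (m1 + w)) + (m2 - w) * (2 * S2 - N2 * (m2 + w))).
  { rewrite perturb with (p := a (j - 1)%nat) (q := t).
    - rewrite (sum_oc_split _ (a (j - 1)%nat) (a j) t) by lia.
      rewrite (diff_const X th' thk (a (j - 1)%nat) (a j) w m1), (diff_const X th' thk (a j) t w m2).
      + specialize (Hmean j ltac:(lia)). rewrite Hmean. fold N1 N2 S2 m1. reflexivity.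
      + intros i Hi. unfold th'. rewrite inR_true by lia. reflexivity.
      + intros i Hi. apply Hc; [lia|]. replace (S j - 1)%nat with j by lia. lia.
      + intros i Hi. unfold th'. rewrite inR_true by lia. reflexivity.
      + intros i Hi. apply Hc; lia.
    - lia.
    - intros i Hi Hr. unfold th'. rewrite inR_false; auto. }
  unfold w in E. lra.
Qed.

Lemma L_left_all n k X thk m a : KFacts n k X thk m a -> forall j, (1 <= j < m)%nat ->
  forall s, (s < a j)%nat ->
  2 * sum_oc X s (a j) < INR (a j - s)%nat * (thk (a j) + thk (a (S j))).
Proof.
  intros KF. assert (Hmean := L_mean n k X thk m a KF). assert (HL := L_left n k X thk m a KF).
  destruct KF as [Hk1 [Hmk [Hm1 [A0 [Am [Ainc [Hc [Hlt Hopt]]]]]]]].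
  induction j; intros Hj s Hs. lia.
  destruct (le_lt_dec (a j) s).
  - apply HL; [lia|]. replace (S j - 1)%nat with j by lia. lia.
  - destruct (Nat.eq_dec j 0). subst. lia.
    specialize (IHj ltac:(lia) s l).
    rewrite (sum_oc_split X s (a j) (a (S j))) by (specialize (Ainc j ltac:(lia)); lia).
    specialize (Hmean (S j) ltac:(lia)). replace (S j - 1)%nat with j in Hmean by lia.
    rewrite Hmean. rewrite (INR_split (a (S j)) (a j) s) by (specialize (Ainc j ltac:(lia)); lia).
    assert (H1 : thk (a j) < thk (a (S j))) by (apply Hlt; lia).
    assert (H2 : thk (a (S j)) < thk (a (S (S j)))) by (apply Hlt; lia).
    assert (HA : 0 < INR (a j - s)) by (apply lt_0_INR; lia).
    assert (HB : 0 < INR (a (S j) - a j)) by (apply lt_0_INR; specialize (Ainc j ltac:(lia)); lia).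
    assert (0 < INR (a j - s) * (thk (a (S (S j))) - thk (a j))) by (apply Rmult_lt_0_compat; lra).
    assert (0 < INR (a (S j) - a j) * (thk (a (S (S j))) - thk (a (S j)))) by (apply Rmult_lt_0_compat; lra).
    lra.
Qed.

Lemma L_right_all n k X thk m a : KFacts n k X thk m a -> forall d j, (j + d = m - 1)%nat ->
  (1 <= j)%nat -> forall t, (a j < t <= n)%nat ->
  INR (t - a j)%nat * (thk (a j) + thk (a (S j))) < 2 * sum_oc X (a j) t.
Proof.
  intros KF. assert (Hmean := L_mean n k X thk m a KF). assert (HR := L_right n k X thk m a KF).
  destruct KF as [Hk1 [Hmk [Hm1 [A0 [Am [Ainc [Hc [Hlt Hopt]]]]]]]].
  assert (Hs := nat_smono a m Ainc).
  induction d; intros j Hjd Hj t Ht.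
  - apply HR; [lia|]. replace (S j) with m by lia. lia.
  - destruct (le_lt_dec t (a (S j))).
    + apply HR; lia.
    + specialize (IHd (S j) ltac:(lia) ltac:(lia) t ltac:(lia)).
      assert (Haj : (a j < a (S j))%nat) by (apply Ainc; lia).
      rewrite (sum_oc_split X (a j) (a (S j)) t) by lia.
      specialize (Hmean (S j) ltac:(lia)). replace (S j - 1)%nat with j in Hmean by lia.
      rewrite Hmean. rewrite (INR_split t (a (S j)) (a j)) by lia.
      assert (H1 : thk (a j) < thk (a (S j))) by (apply Hlt; lia).
      assert (H2 : thk (a (S j)) < thk (a (S (S j)))) by (apply Hlt; lia).
      assert (HA : 0 < INR (t - a (S j))) by (apply lt_0_INR; lia).
      assert (HB : 0 < INR (a (S j) - a j)) by (apply lt_0_INR; lia).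
      assert (0 < INR (t - a (S j)) * (thk (a (S (S j))) - thk (a j))) by (apply Rmult_lt_0_compat; lra).
      assert (0 < INR (a (S j) - a j) * (thk (a (S j)) - thk (a j))) by (apply Rmult_lt_0_compat; lra).
      lra.
Qed.

Lemma iso_prefix n X th p r : Nondecr n th ->
  (forall th', Nondecr n th' -> sqdist n X th <= sqdist n X th') ->
  (p < r)%nat -> (r <= n)%nat -> (forall i, (p < i <= r)%nat -> th i = th r) ->
  (p = 0%nat \/ th p < th r) -> INR (r - p)%nat * th r <= sum_oc X p r.
Proof.
  intros Hnd Hopt Hpr Hrn Hcst Hp.
  set (v := th r). set (N := INR (r - p)%nat). set (Sm := sum_oc X p r).
  assert (HN : 0 < N) by (apply lt_0_INR; lia).
  assert (Hd : exists d, 0 < d /\ (p <> 0%nat -> d <= v - th p)).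
  { destruct Hp as [Hp|Hp]. exists 1. split; [lra|intros; lia].
    exists (v - th p). split; [unfold v; lra|intros; lra]. }
  destruct Hd as [d [Hd Hdp]].
  apply Rge_le, Rminus_ge, Rle_ge. apply (small_eps d N); [auto|lra|].
  intros e He.
  set (th' := fun i => if inR p r i then v - e else th i).
  assert (Hin : Nondecr n th').
  { intros i j Hij Hjn. unfold th'.
    destruct (inR p r i) eqn:Ei; destruct (inR p r j) eqn:Ej;
      try apply inR_iff in Ei; try apply inR_iff in Ej.
    - lra.
    - assert (Hj : (r < j)%nat) by (destruct (le_lt_dec j r); auto; exfalso;
        rewrite inR_true in Ej by lia; discriminate).
      assert (th r <= th j) by (apply Hnd; lia). unfold v. lra.
    - assert (Hi : (i <= p)%nat) by (destruct (le_lt_dec i p); auto; exfalso;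
        rewrite inR_true in Ei by lia; discriminate).
      assert (th i <= th p) by (apply Hnd; lia). specialize (Hdp ltac:(lia)). lra.
    - apply Hnd; lia. }
  specialize (Hopt th' Hin).
  assert (E : sqdist n X th' - sqdist n X th = (v - (v - e)) * (2 * Sm - N * (v + (v - e)))).
  { rewrite perturb with (p := p) (q := r).
    - apply diff_const.
      + intros i Hi. unfold th'. rewrite inR_true by lia. reflexivity.
      + intros i Hi. apply Hcst; lia.
    - lia.
    - intros i Hi Hr. unfold th'. rewrite inR_false; auto. }
  replace (e * (2 * (Sm - N * v) + N * e)) with ((v - (v - e)) * (2 * Sm - N * (v + (v - e)))) by ring.
  lra.
Qed.

Lemma iso_suffix n X th p q : Nondecr n th ->
  (forall th', Nondecr n th' -> sqdist n X th <= sqdist n X th') ->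
  (p < q)%nat -> (q <= n)%nat -> (forall i, (p < i <= q)%nat -> th i = th (S p)) ->
  (q = n \/ th (S p) < th (S q)) -> sum_oc X p q <= INR (q - p)%nat * th (S p).
Proof.
  intros Hnd Hopt Hpq Hqn Hcst Hq.
  set (v := th (S p)). set (N := INR (q - p)%nat). set (Sm := sum_oc X p q).
  assert (HN : 0 < N) by (apply lt_0_INR; lia).
  assert (Hd : exists d, 0 < d /\ (q <> n -> d <= th (S q) - v)).
  { destruct Hq as [Hq|Hq]. exists 1. split; [lra|intros; lia].
    exists (th (S q) - v). split; [unfold v; lra|intros; lra]. }
  destruct Hd as [d [Hd Hdq]].
  apply Rge_le, Rminus_ge, Rle_ge. apply (small_eps d N); [auto|lra|].
  intros e He.
  set (th' := fun i => if inR p q i then v + e else th i).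
  assert (Hin : Nondecr n th').
  { intros i j Hij Hjn. unfold th'.
    destruct (inR p q i) eqn:Ei; destruct (inR p q j) eqn:Ej;
      try apply inR_iff in Ei; try apply inR_iff in Ej.
    - lra.
    - assert (Hj : (q < j)%nat) by (destruct (le_lt_dec j q); auto; exfalso;
        rewrite inR_true in Ej by lia; discriminate).
      assert (th (S q) <= th j) by (apply Hnd; lia). specialize (Hdq ltac:(lia)). lra.
    - assert (Hi : (i <= p)%nat) by (destruct (le_lt_dec i p); auto; exfalso;
        rewrite inR_true in Ei by lia; discriminate).
      assert (th i <= th (S p)) by (apply Hnd; lia). unfold v. lra.
    - apply Hnd; lia. }
  specialize (Hopt th' Hin).
  assert (E : sqdist n X th' - sqdist n X th = (v - (v + e)) * (2 * Sm - N * (v + (v + e)))).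
  { rewrite perturb with (p := p) (q := q).
    - apply diff_const.
      + intros i Hi. unfold th'. rewrite inR_true by lia. reflexivity.
      + intros i Hi. apply Hcst; lia.
    - lia.
    - intros i Hi Hr. unfold th'. rewrite inR_false; auto. }
  replace (e * (2 * (N * v - Sm) + N * e)) with ((v - (v + e)) * (2 * Sm - N * (v + (v + e)))) by ring.
  lra.
Qed.

Lemma run_left (th : nat -> R) : forall i, (1 <= i)%nat -> exists p, (p < i)%nat /\
  (forall x, (p < x <= i)%nat -> th x = th i) /\ (p = 0%nat \/ th p <> th i).
Proof.
  induction i; intros Hi. lia.
  destruct (Nat.eq_dec i 0).
  - subst. exists 0%nat. split; [lia|]. split; [|auto]. intros x Hx. replace x with 1%nat by lia. auto.
  - destruct (Req_dec (th i) (th (S i))) as [Heq|Hne].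
    + destruct (IHi ltac:(lia)) as [p [Hp1 [Hp2 Hp3]]]. exists p. split; [lia|]. split.
      * intros x Hx. destruct (Nat.eq_dec x (S i)). subst; auto. rewrite Hp2 by lia. auto.
      * rewrite <- Heq. auto.
    + exists i. split; [lia|]. split; [|auto]. intros x Hx. replace x with (S i) by lia. auto.
Qed.

Lemma run_right (th : nat -> R) n : forall d i, (i + d = n)%nat -> exists q, (i <= q <= n)%nat /\
  (forall x, (i <= x <= q)%nat -> th x = th i) /\ (q = n \/ th (S q) <> th i).
Proof.
  induction d; intros i Hid.
  - exists i. split; [lia|]. split; [|left; lia]. intros x Hx. replace x with i by lia. auto.
  - destruct (Req_dec (th i) (th (S i))) as [Heq|Hne].
    + destruct (IHd (S i) ltac:(lia)) as [q [Hq1 [Hq2 Hq3]]]. exists q. split; [lia|]. split.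
      * intros x Hx. destruct (Nat.eq_dec x i). subst; auto. rewrite Hq2 by lia. auto.
      * rewrite Heq. auto.
    + exists i. split; [lia|]. split; [|auto]. intros x Hx. replace x with i by lia. auto.
Qed.

Lemma div_lt1 N S c : 0 < N -> 2 * S < N * c -> S / N < c / 2.
Proof.
  intros. replace (S / N) with ((2 * S) * / (2 * N)) by (field; lra).
  replace (c / 2) with ((N * c) * / (2 * N)) by (field; lra).
  apply Rmult_lt_compat_r; [apply Rinv_0_lt_compat; lra | lra].
Qed.

Lemma div_lt2 N S c : 0 < N -> N * c < 2 * S -> c / 2 < S / N.
Proof.
  intros. replace (S / N) with ((2 * S) * / (2 * N)) by (field; lra).
  replace (c / 2) with ((N * c) * / (2 * N)) by (field; lra).
  apply Rmult_lt_compat_r; [apply Rinv_0_lt_compat; lra | lra].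
Qed.

Theorem mainTheorem12 (n k : nat) (X thk thn : nat -> R)
  (m : nat) (a : nat -> nat) (mn : nat) (b : nat -> nat) :
  (1 <= k <= n)%nat ->
  InThetaUp n k thk ->
  (forall th, InThetaUp n k th -> sqdist n X thk <= sqdist n X th) ->
  Nondecr n thn ->
  (forall th, Nondecr n th -> sqdist n X thn <= sqdist n X th) ->
  MaxBlocks n thk m a ->
  MaxBlocks n thn mn b ->
  (* 1. *)
  (forall j i, (1 <= j <= m)%nat -> (a (j - 1) < i <= a j)%nat ->
      thk i = mean_oc X (a (j - 1)%nat) (a j)) /\
  (* 2. *)
  (forall j, (1 <= j <= m - 1)%nat ->
      (forall s t, (s < a j)%nat -> (a j < t)%nat -> (t <= n)%nat ->
         mean_oc X s (a j) < (thk (a j) + thk (a (S j))) / 2 /\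
         (thk (a j) + thk (a (S j))) / 2 < mean_oc X (a j) t) /\
      thn (a j) < (thk (a j) + thk (a (S j))) / 2 /\
      (thk (a j) + thk (a (S j))) / 2 < thn (S (a j))) /\
  (* 3. A_k subset A_n *)
  (forall j, (1 <= j <= m)%nat -> exists j', (1 <= j' <= mn)%nat /\ b j' = a j).
Proof.
  intros Hkn Hink Hoptk Hndn Hoptn MBk MBn.
  assert (Hndk := inTheta_nondecr _ _ _ Hink).
  assert (Hmk := m_le_k n k thk m a ltac:(lia) Hink MBk).
  destruct MBk as [A0 [Am [Ainc [Acst Ajump]]]].
  assert (Hm1 : (1 <= m)%nat) by (destruct m; [rewrite A0 in Am; lia | lia]).
  assert (Hs := nat_smono a m Ainc).
  assert (Hc : forall j i, (1 <= j <= m)%nat -> (a (j - 1) < i <= a j)%nat -> thk i = thk (a j)).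
  { intros j i Hj Hi. apply (Acst j i (a j)); auto. split; [apply Hs|]; lia. }
  assert (Hlt : forall j, (1 <= j < m)%nat -> thk (a j) < thk (a (S j))).
  { intros j Hj.
    assert (H1 : thk (a j) <= thk (S (a j))).
    { apply Hndk. specialize (Hs 0%nat j ltac:(lia) ltac:(lia)). lia.
      assert (a (S j) <= n)%nat by (destruct (Nat.eq_dec (S j) m); [subst; lia | specialize (Hs (S j) m); lia]).
      specialize (Ainc j ltac:(lia)). lia. }
    assert (H2 : thk (S (a j)) = thk (a (S j))).
    { apply Hc; [lia|]. replace (S j - 1)%nat with j by lia.
      specialize (Ainc j ltac:(lia)). lia. }
    specialize (Ajump j ltac:(lia)).
    destruct (Rle_lt_or_eq_dec _ _ H1); [lra | congruence]. }
  assert (KF : KFacts n k X thk m a) by (repeat split; auto; lia).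
  assert (Hmean := L_mean n k X thk m a KF).
  assert (HLa := L_left_all n k X thk m a KF).
  assert (HRa := L_right_all n k X thk m a KF).
  assert (P2 : forall j, (1 <= j <= m - 1)%nat ->
      (forall s t, (s < a j)%nat -> (a j < t)%nat -> (t <= n)%nat ->
         mean_oc X s (a j) < (thk (a j) + thk (a (S j))) / 2 /\
         (thk (a j) + thk (a (S j))) / 2 < mean_oc X (a j) t) /\
      thn (a j) < (thk (a j) + thk (a (S j))) / 2 /\
      (thk (a j) + thk (a (S j))) / 2 < thn (S (a j))).
  { intros j Hj.
    assert (Haj1 : (1 <= a j)%nat) by (specialize (Hs 0%nat j ltac:(lia) ltac:(lia)); lia).
    assert (Hajn : (a j < n)%nat) by (specialize (Hs j m ltac:(lia) ltac:(lia)); lia).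
    assert (Hright : forall t, (a j < t <= n)%nat ->
      INR (t - a j)%nat * (thk (a j) + thk (a (S j))) < 2 * sum_oc X (a j) t).
    { intros t Ht. apply (HRa (m - 1 - j)%nat j); lia. }
    split; [|split].
    - intros s t Hs1 Ht1 Ht2. unfold mean_oc. split.
      + apply div_lt1; [apply lt_0_INR; lia|]. apply HLa; lia.
      + apply div_lt2; [apply lt_0_INR; lia|]. apply Hright; lia.
    - destruct (run_left thn (a j) Haj1) as [p [Hp1 [Hp2 Hp3]]].
      assert (Hp : p = 0%nat \/ thn p < thn (a j)).
      { destruct (Nat.eq_dec p 0); [left; auto|right].
        destruct Hp3 as [|Hp3]; [lia|].
        assert (thn p <= thn (a j)) by (apply Hndn; lia).
        destruct (Rle_lt_or_eq_dec _ _ H); [auto | congruence]. }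
      assert (H1 := iso_prefix n X thn p (a j) Hndn Hoptn Hp1 ltac:(lia) Hp2 Hp).
      assert (H2 := HLa j ltac:(lia) p Hp1).
      assert (HN : 0 < INR (a j - p)) by (apply lt_0_INR; lia).
      apply (Rmult_lt_reg_l (INR (a j - p))); [auto|]. lra.
    - destruct (run_right thn n (n - S (a j)) (S (a j)) ltac:(lia)) as [q [Hq1 [Hq2 Hq3]]].
      assert (Hq : q = n \/ thn (S (a j)) < thn (S q)).
      { destruct (Nat.eq_dec q n); [left; auto|right].
        destruct Hq3 as [|Hq3]; [lia|].
        assert (thn (S (a j)) <= thn (S q)) by (apply Hndn; lia).
        destruct (Rle_lt_or_eq_dec _ _ H); [auto | congruence]. }
      assert (H1 := iso_suffix n X thn (a j) q Hndn Hoptn ltac:(lia) ltac:(lia)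
                       ltac:(intros x Hx; apply Hq2; lia) Hq).
      assert (H2 := Hright q ltac:(lia)).
      assert (HN : 0 < INR (q - a j)) by (apply lt_0_INR; lia).
      apply (Rmult_lt_reg_l (INR (q - a j))); [auto|]. lra. }
  split; [|split; [exact P2|]].
  - intros j i Hj Hi. rewrite (Hc j i Hj Hi). unfold mean_oc. rewrite Hmean by auto.
    assert (0 < INR (a j - a (j - 1))%nat) by (apply lt_0_INR; specialize (Hs (j - 1)%nat j); lia).
    field. lra.
  - destruct MBn as [B0 [Bm [Binc [Bcst Bjump]]]]. intros j Hj.
    destruct (Nat.eq_dec j m).
    + subst j. exists mn. split; [|congruence].
      destruct mn; [rewrite B0 in Bm; lia | lia].
    + destruct (P2 j ltac:(lia)) as [_ [H1 H2]].
      assert (Haj1 : (1 <= a j)%nat) by (specialize (Hs 0%nat j ltac:(lia) ltac:(lia)); lia).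
      assert (Hajn : (a j < n)%nat) by (specialize (Hs j m ltac:(lia) ltac:(lia)); lia).
      destruct (piece_exists b B0 mn (a j) ltac:(lia)) as [l [Hl Hil]].
      exists l. split; [lia|].
      destruct (Nat.eq_dec (b l) (a j)); auto. exfalso.
      assert (thn (a j) = thn (S (a j))) by (apply (Bcst l); lia). lra.
Qed.
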